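(* The problem of computing the core number of a fixed designated vertex $v$ (on incremental graph streams) admits an extendable bitwise AND gadget with $v(d)=O(d^2)$ and $t(d)=O(d^4)$.
   Context: The core number of a vertex $v$ in $G$ is the largest $k$ such that $v$ belongs to a subgraph of $G$ with minimum degree at least $k$. Let $\zeta\in\mathbb N$ be a fixed constant and $m=\zeta d$. An extendable bitwise AND gadget for a graph function $g$ (here real-valued: the core number of the designated vertex $v$, which is a vertex of the gadget graph) consists of positive increasing functions $v,t:\mathbb N\to\mathbb N$ and, for each $d$: an initial graph $H_{\mathrm{init}}=(V,E_0)$ with $|V|=v(d)$; edges $e_1,\dots,e_d\in\binom V2$, defining $H^1_x=H_{\mathrm{init}}\cup\{e_i: x_i=1\}$ for $x\in\{0,1\}^d$; and for every sequence of queries $q^1,\dots,q^m\in\{0,1\}^d$, edge sets $S^1,T^1,\dots,S^m,T^m$ and functions $\mathrm{dec}_j:\mathrm{Range}(g)\to\mathbb R$ (depending on the queries but not on $x$) such that: (a) each $\mathrm{dec}_j$ is $1$-Lipschitz; (b) with $Q^j_x=H^j_x\cup S^j$, $\mathrm{dec}_j(g(Q^j_x))-\mathrm{dec}_j(g(H^j_x))=\langle x,q^j\rangle$ for all $x$; (c) $H^{j+1}_x=Q^j_x\cup T^j$; and the total number of edge insertions $|E_0|+d+\sum_j(|S^j|+|T^j|)$ is at most $t(d)$. For real-valued $g$ one may take $\mathrm{dec}_j=\mathrm{id}$. *)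

(* Defs.v *)
From Stdlib Require Import Reals.
From mathcomp Require Import all_boot.

Set Implicit Arguments.
Unset Strict Implicit.
Unset Printing Implicit Defensive.

Definition edge_set (n : nat) (E : {set {set 'I_n}}) : Prop :=
  forall e, e \in E -> #|e| = 2.

Definition deg_in (n : nat) (E : {set {set 'I_n}}) (U : {set 'I_n}) (x : 'I_n) : nat :=
  #|[set y in U | [set x; y] \in E]|.

(* minimum degree of the induced subgraph on U (U nonempty; default n is an
   upper bound for any degree, so it is neutral) *)
Definition min_deg (n : nat) (E : {set {set 'I_n}}) (U : {set 'I_n}) : nat :=
  \big[minn/n]_(x in U) deg_in E U x.

(* core number of v: largest k such that v lies in a subgraph of minimum degree
   at least k (it suffices to consider induced subgraphs). *)
Definition core_number (n : nat) (E : {set {set 'I_n}}) (v : 'I_n) : nat :=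
  \max_(U : {set 'I_n} | v \in U) min_deg E U.

Definition inner (d : nat) (x q : {ffun 'I_d -> bool}) : nat :=
  \sum_(i < d) ((x i && q i) : nat).

(* The graph H^{j+1}_x (0-indexed: stage j here is stage j+1 of the paper). *)
Fixpoint Hgraph (n d : nat) (E0 : {set {set 'I_n}}) (e : 'I_d -> {set 'I_n})
  (Sx Tx : nat -> {set {set 'I_n}}) (x : {ffun 'I_d -> bool}) (j : nat)
  : {set {set 'I_n}} :=
  match j with
  | 0 => E0 :|: [set e i | i in [pred i | x i]]
  | j'.+1 => Hgraph E0 e Sx Tx x j' :|: Sx j' :|: Tx j'
  end.

Definition Qgraph (n d : nat) (E0 : {set {set 'I_n}}) (e : 'I_d -> {set 'I_n})
  (Sx Tx : nat -> {set {set 'I_n}}) (x : {ffun 'I_d -> bool}) (j : nat)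
  : {set {set 'I_n}} :=
  Hgraph E0 e Sx Tx x j :|: Sx j.

Definition pos_increasing (f : nat -> nat) : Prop :=
  (forall d, 0 < f d) /\ (forall d1 d2, d1 < d2 -> f d1 < f d2).

Definition bigO (f g : nat -> nat) : Prop :=
  exists C N : nat, forall d, N <= d -> f d <= C * g d.

Definition core_AND_gadget (zeta : nat) (vf tf : nat -> nat) : Prop :=
  pos_increasing vf /\ pos_increasing tf /\
  forall d : nat,
  exists (E0 : {set {set 'I_(vf d)}}) (vtx : 'I_(vf d)) (e : 'I_d -> {set 'I_(vf d)}),
    edge_set E0 /\ (forall i, #|e i| = 2) /\
    forall q : 'I_(zeta * d) -> {ffun 'I_d -> bool},
    exists (Sx Tx : nat -> {set {set 'I_(vf d)}}) (dec : nat -> nat -> R),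
      (forall j, j < zeta * d -> edge_set (Sx j) /\ edge_set (Tx j)) /\
      (forall j, j < zeta * d -> forall a b : nat,
          Rle (Rabs (Rminus (dec j a) (dec j b))) (Rabs (Rminus (INR a) (INR b)))) /\
      (forall (x : {ffun 'I_d -> bool}) (j : 'I_(zeta * d)),
          Rminus (dec j (core_number (Qgraph E0 e Sx Tx x j) vtx))
                 (dec j (core_number (Hgraph E0 e Sx Tx x j) vtx))
          = INR (inner x (q j))) /\
      #|E0| + d + \sum_(j < zeta * d) (#|Sx j| + #|Tx j|) <= tf d.

(* Main.v *)
Require Import Defs.
From Stdlib Require Import Reals.
From mathcomp Require Import all_boot zify.
Set Implicit Arguments. Unset Strict Implicit. Unset Printing Implicit Defensive.

Section Gadget.
Variables d M : nat.
Local Notation n := (d + M).+1.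

Definition vv : 'I_n := ord0.
Definition uu (i : 'I_d) : 'I_n := inord i.+1.
Lemma uuE i : val (uu i) = i.+1.
Proof. rewrite /uu /= inordK //; have := ltn_ord i; lia. Qed.
Lemma uu_inj : injective uu.
Proof. move=> i j /(congr1 val); rewrite !uuE => [[]] /val_inj. done. Qed.
Definition kp c : {set 'I_n} := [set z : 'I_n | d < z < d.+1 + c].
Lemma card_kp c : c <= M -> #|kp c| = c.
Proof.
move=> cM.
have -> : kp c = [set (inord (d.+1 + t) : 'I_n) | t : 'I_c].
  apply/setP => z; rewrite inE; apply/idP/imsetP.
    move=> /andP[h1 h2].
    have ht : z - d.+1 < c by lia.
    exists (Ordinal ht) => //; apply: val_inj; rewrite /= inordK; lia.
  move=> [t _ ->]; have := ltn_ord t; have := cM; move=> *; rewrite inordK; lia.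
rewrite card_imset ?card_ord //.
move=> t1 t2 e; have := congr1 (@nat_of_ord _) e; have := ltn_ord t1; have := ltn_ord t2; move=> h1 h2 H.
rewrite !inordK in H; try lia. by apply: val_inj; rewrite /=; lia.
Qed.

Lemma bigmin_le (I : eqType) (r : seq I) (P : pred I) (F : I -> nat) k y :
  y \in r -> P y -> \big[minn/k]_(i <- r | P i) F i <= F y.
Proof.
elim: r => [//|a s IH]; rewrite inE big_cons => /orP[/eqP <-|ys] Py.
  by rewrite Py geq_minl.
case: (P a); last exact: IH.
exact: leq_trans (geq_minr _ _) (IH ys Py).
Qed.

Lemma deg_le (G : {set {set 'I_n}}) (U : {set 'I_n}) y : y \in U -> min_deg G U <= deg_in G U y.
Proof. by move=> yU; rewrite /min_deg; apply: bigmin_le; rewrite ?mem_index_enum. Qed.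

Lemma min_deg_ge (G : {set {set 'I_n}}) (U : {set 'I_n}) k : k <= n ->
  (forall y, y \in U -> k <= deg_in G U y) -> k <= min_deg G U.
Proof.
move=> kn h; rewrite /min_deg; apply: (big_ind (fun m => k <= m)) => //.
  by move=> a b ha hb; rewrite leq_min ha hb.
Qed.

Lemma core_eq (G : {set {set 'I_n}}) (c : nat) (P W : {pred 'I_d}) :
  0 < c -> c + d < M ->
  (forall a b : 'I_n, d < a -> d < b -> a != b -> [set a; b] \in G) ->
  (forall y : 'I_n, y \in kp c -> [set vv; y] \in G) ->
  (forall i, P i -> forall y : 'I_n, y \in kp (c + d) -> [set uu i; y] \in G) ->
  (forall i, P i -> [set vv; uu i] \in G) ->
  (forall y : 'I_n, [set vv; y] \in G -> y \in kp c \/ exists i, y = uu i /\ (P i || W i)) ->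
  (forall i, W i -> forall y : 'I_n, [set uu i; y] \in G -> y = vv \/ y \in kp c.-1) ->
  core_number G vv = c + #|P|.
Proof.
move=> c0 cM Hcl Hv Hu Hvu Nv Nu.
have Pd : #|P| <= d by have := max_card (mem P); rewrite card_ord.
have kpE z : (z \in kp c) = (d < z < d.+1 + c) by rewrite inE.
have uuk i z : z \in kp c -> z != uu i.
  by rewrite kpE => /andP[h _]; apply/eqP => e; move: h; rewrite e uuE; have := ltn_ord i; lia.
apply/eqP; rewrite eqn_leq; apply/andP; split.
- apply/bigmax_leqP => U vU.
  case: (boolP [exists i, W i && (uu i \in U)]).
  + move=> /existsP[i /andP[nPi uU]].
    apply: (leq_trans (deg_le G uU)).
    apply: (@leq_trans #|[set vv] :|: kp c.-1|).
      apply: subset_leq_card; apply/subsetP => z; rewrite inE => /andP[_ e].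
      by case: (Nu i nPi z e) => [->|zk]; rewrite !inE ?eqxx //; move: zk; rewrite inE => ->; rewrite orbT.
    apply: (leq_trans (leq_card_setU _ _)); rewrite cards1 card_kp; lia.
  + move=> /existsPn hn.
    apply: (leq_trans (deg_le G vU)).
    apply: (@leq_trans #|kp c :|: uu @: P|).
      apply: subset_leq_card; apply/subsetP => z; rewrite inE => /andP[zU e].
      rewrite inE; case: (Nv z e) => [->//|[i [ei PW]]].
      apply/orP; right; apply/imsetP; exists i => //.
      by have := hn i; rewrite -ei zU andbT; move: PW; case: (W i); rewrite ?orbF.
    apply: (leq_trans (leq_card_setU _ _)); rewrite card_kp ?card_imset //; [exact: uu_inj|lia].
- pose U0 := [set y : 'I_n | (d < y) || (y == vv) || (y \in uu @: P)].
  have vU0 : vv \in U0 by rewrite inE eqxx orbT.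
  rewrite /core_number (bigD1 U0) //=; apply: leq_trans (leq_maxl _ _).
  apply: min_deg_ge => [|y]; first lia.
  rewrite inE => /orP[/orP[hy|/eqP ->]|/imsetP[i Pi ->]].
  + apply: (@leq_trans #|kp M :\ y|).
      have := cardsD1 y (kp M); rewrite card_kp // inE hy /=.
      have -> : y < d.+1 + M by have := ltn_ord y; lia.
      lia.
    apply: subset_leq_card; apply/subsetP => z; rewrite !inE => /andP[zy /andP[zd _]].
    by rewrite zd /=; apply: Hcl => //; rewrite eq_sym.
  + apply: (@leq_trans #|kp c :|: uu @: P|).
      rewrite cardsU card_kp ?card_imset; [|exact: uu_inj|lia].
      suff -> : kp c :&: uu @: P = set0 by rewrite cards0 subn0.
      apply/setP => z; rewrite in_setI in_set0; apply/negbTE; apply/andP => [[zk /imsetP[i _ e]]].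
      by move: (uuk i z zk); rewrite e eqxx.
    apply: subset_leq_card; apply/subsetP => z; rewrite inE => /orP[zk|/imsetP[i Pi ->]].
      rewrite inE (Hv _ zk) andbT inE; move: zk; rewrite kpE => /andP[-> _] //.
    by rewrite inE (Hvu _ Pi) andbT inE; apply/orP; right; apply/imsetP; exists i.
  + apply: (@leq_trans #|kp (c + d)|); first by rewrite card_kp; lia.
    apply: subset_leq_card; apply/subsetP => z zk.
    rewrite inE (Hu _ Pi _ zk) andbT inE; move: zk; rewrite inE => /andP[-> _] //.
Qed.

Lemma pair_eq (a b x y : 'I_n) : [set a; b] = [set x; y] -> (a = x /\ b = y) \/ (a = y /\ b = x).
Proof.
move=> E.
have ha : a \in [set x; y] by rewrite -E set21.
have hb : b \in [set x; y] by rewrite -E set22.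
have hx : x \in [set a; b] by rewrite E set21.
have hy : y \in [set a; b] by rewrite E set22.
move/set2P: ha => ha; move/set2P: hb => hb; move/set2P: hx => hx; move/set2P: hy => hy.
case: (eqVneq a x) => [ax|ax].
  case: (eqVneq b y) => [|by_]; first by left.
  case: hb => [bx|]; last by move=> e; case/eqP: by_.
  by case: hy => yv; left; split => //; rewrite bx -?yv //; subst.
case: ha => [e|ay]; first by case/eqP: ax.
case: hx => [xa|xb]; first by case/eqP: ax.
by right.
Qed.

Definition gr (r : rel 'I_n) : {set {set 'I_n}} :=
  [set f : {set 'I_n} | [exists a, exists b, [&& a != b, r a b & f == [set a; b]]]].

Lemma gr_edge (r : rel 'I_n) : edge_set (gr r).
Proof. by move=> f; rewrite inE => /existsP[a /existsP[b /and3P[ab _ /eqP ->]]]; rewrite cards2 ab. Qed.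

Lemma gr_in (r : rel 'I_n) a b : a != b -> r a b -> [set a; b] \in gr r.
Proof. by move=> ab rab; rewrite inE; apply/existsP; exists a; apply/existsP; exists b; rewrite ab rab eqxx. Qed.

Lemma gr_in' (r : rel 'I_n) a b : a != b -> r b a -> [set a; b] \in gr r.
Proof. by move=> ab rab; rewrite setUC; apply: gr_in; rewrite // eq_sym. Qed.

Lemma gr_out (r : rel 'I_n) f : f \in gr r -> exists a b, [/\ a != b, r a b & f = [set a; b]].
Proof. by rewrite inE => /existsP[a /existsP[b /and3P[ab rab /eqP ->]]]; exists a, b. Qed.


Lemma kpE c z : (z \in kp c) = (d < z < d.+1 + c).
Proof. by rewrite inE. Qed.
Lemma vv_kp c : (vv \in kp c) = false.
Proof. by rewrite kpE. Qed.
Lemma uu_kp c i : (uu i \in kp c) = false.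
Proof. by rewrite kpE uuE; have := ltn_ord i; lia. Qed.
Lemma vv_uu i : (vv == uu i) = false.
Proof. by apply/negbTE/eqP => /(congr1 val); rewrite uuE. Qed.
Lemma uu_vv i : (uu i == vv) = false.
Proof. by rewrite eq_sym vv_uu. Qed.

Definition Lj j := d.+1 * j.+1.
Lemma LjS j : (Lj j.+1).-1 = Lj j + d.
Proof. rewrite /Lj (mulnS _ j.+1); lia. Qed.
Lemma Lj_pos j : 0 < Lj j.
Proof. by rewrite /Lj muln_gt0. Qed.
Lemma Lj_mono j : Lj j <= Lj j.+1.
Proof. by rewrite /Lj leq_mul2l ltnW ?orbT. Qed.

Definition E0g := gr (fun a b => ((d < a) && (d < b)) || ((a == vv) && (b \in kp (Lj 0)))).
Definition eg (i : 'I_d) : {set 'I_n} := [set vv; uu i].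
Definition Sg (qf : nat -> 'I_d -> bool) j :=
  gr (fun a b => [exists i, qf j i && (a == uu i)] && (b \in kp (Lj j + d))).
Definition Tg j := gr (fun a b => (a == vv) && (b \in kp (Lj j.+1))).

Definition ovr (x : {ffun 'I_d -> bool}) j (a b : 'I_n) :=
  [|| (d < a) && (d < b), (a == vv) && (b \in kp (Lj j)),
      (a == vv) && [exists i, x i && (b == uu i)] |
      [exists i, a == uu i] && (b \in kp (Lj j).-1)].

Lemma ovr_mono x j a b : ovr x j a b -> ovr x j.+1 a b.
Proof.
have := Lj_mono j; have := LjS j; move=> h1 h.
rewrite /ovr !kpE => /or4P[->|/andP[-> hb]|->|/andP[-> hb]]; rewrite ?orbT //.
  by apply/or4P; apply: Or42; apply/andP; split=> //; lia.
by apply/or4P; apply: Or44; apply/andP; split=> //; lia.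
Qed.

Lemma H_out (qf : nat -> 'I_d -> bool) x j f : f \in Hgraph E0g eg (Sg qf) Tg x j ->
  exists a b, [/\ a != b, f = [set a; b] & ovr x j a b || ovr x j b a].
Proof.
elim: j f => [|j IH] f /=.
  case/setUP.
    move/gr_out => [a [b [ab rab ->]]]; exists a, b; split => //.
    by rewrite /ovr; case/orP: rab => [->|->]; rewrite ?orbT.
  move=> /imsetP[i xi ->]; exists vv, (uu i); split => //; first by rewrite vv_uu.
  by apply/orP; left; rewrite /ovr; apply/or4P; apply: Or43; rewrite eqxx /=; apply/existsP; exists i; rewrite eqxx andbT; move: xi; rewrite inE.
case/setUP; first case/setUP.
- move/IH => [a [b [ab e h]]]; exists a, b; split => //.
  by case/orP: h => /ovr_mono ->; rewrite ?orbT.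
- move/gr_out => [a [b [ab /andP[ha hb] ->]]]; exists a, b; split => //.
  apply/orP; left; apply/or4P; apply: Or44; rewrite LjS hb andbT.
  by case/existsP: ha => i /andP[_ e]; apply/existsP; exists i.
- move/gr_out => [a [b [ab /andP[ha hb] ->]]]; exists a, b; split => //.
  by apply/orP; left; apply/or4P; apply: Or42; rewrite ha hb.
Qed.


Notation HG qf x j := (Hgraph E0g eg (Sg qf) Tg x j).

Lemma H0_sub qf x j : HG qf x 0 \subset HG qf x j.
Proof.
elim: j => [//|j IH] /=; apply: (subset_trans IH).
by apply: subset_trans (subsetUl _ _) (subsetUl _ _).
Qed.

Lemma in_H0 qf x j f : f \in HG qf x 0 -> f \in HG qf x j.
Proof. by move=> h; apply: (subsetP (H0_sub qf x j)). Qed.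

Lemma H_cl (qf : nat -> 'I_d -> bool) x j (a b : 'I_n) : d < a -> d < b -> a != b -> [set a; b] \in HG qf x j.
Proof. by move=> ha hb ab; apply: in_H0; apply/setUP; left; apply: gr_in => //; rewrite ha hb. Qed.

Lemma H_vk (qf : nat -> 'I_d -> bool) x j y : y \in kp (Lj j) -> [set vv; y] \in HG qf x j.
Proof.
move=> yk.
have vy : vv != y by apply/eqP => e; move: yk; rewrite -e vv_kp.
case: j yk => [|j] yk.
  by apply: in_H0; apply/setUP; left; apply: gr_in => //; rewrite yk eqxx orbT.
by apply/setUP; right; apply: gr_in => //; rewrite eqxx yk.
Qed.

Lemma H_x (qf : nat -> 'I_d -> bool) (x : {ffun 'I_d -> bool}) j i : x i -> [set vv; uu i] \in HG qf x j.
Proof.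
move=> xi; apply: in_H0; apply/setUP; right.
by apply/imsetP; exists i.
Qed.

Lemma H_vnb (qf : nat -> 'I_d -> bool) (x : {ffun 'I_d -> bool}) j y : [set vv; y] \in HG qf x j -> y \in kp (Lj j) \/ exists i, y = uu i /\ x i.
Proof.
move/H_out => [a [b [ab e h]]].
have dv : (d < vv) = false by [].
have e1 : [exists i, vv == uu i] = false by apply/existsP => [[i]]; rewrite vv_uu.
have e2 : [exists i, x i && (vv == uu i)] = false by apply/existsP => [[i]]; rewrite vv_uu andbF.
have fin : (y \in kp (Lj j)) || [exists i, x i && (y == uu i)] ->
   y \in kp (Lj j) \/ exists i, y = uu i /\ x i.
  by case/orP => [->|/existsP[i /andP[xi /eqP ->]]]; [left|right; exists i].
case: (pair_eq e) => [[ea eb]|[ea eb]]; subst a b; move: h;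
  (have yv : (y == vv) = false by apply/eqP => E; move: ab; rewrite E eqxx);
  rewrite /ovr yv dv e1 e2 eqxx !vv_kp !andbF ?andFb ?orbF ?orFb ?andTb;
  exact: fin.
Qed.


Lemma uu_nkp c i : (uu i \in kp c) = false.
Proof. exact: uu_kp. Qed.

Lemma H_unb (qf : nat -> 'I_d -> bool) (x : {ffun 'I_d -> bool}) j i y : [set uu i; y] \in HG qf x j -> y = vv \/ y \in kp (Lj j).-1.
Proof.
move/H_out => [a [b [ab e h]]].
have du : (d < uu i) = false by rewrite uuE; have := ltn_ord i; lia.
have e1 : [exists i', uu i == uu i'] = true by apply/existsP; exists i.
case: (pair_eq e) => [[ea eb]|[ea eb]]; subst a b; move: h;
  rewrite /ovr du uu_vv e1 !uu_kp !andbF ?andFb ?orbF ?orFb ?andTb.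
- by case/orP => [->|/andP[/eqP -> _]]; [right|left].
- by case/orP => [/andP[/eqP -> _]|->]; [left|right].
Qed.


Notation QG qf x j := (Qgraph E0g eg (Sg qf) Tg x j).

Lemma Q_H (qf : nat -> 'I_d -> bool) x j f : f \in HG qf x j -> f \in QG qf x j.
Proof. by move=> h; apply/setUP; left. Qed.

Lemma Q_u (qf : nat -> 'I_d -> bool) x j i y : qf j i -> y \in kp (Lj j + d) -> [set uu i; y] \in QG qf x j.
Proof.
move=> qi yk; apply/setUP; right; apply: gr_in.
  by apply/eqP => E; move: yk; rewrite -E uu_kp.
by rewrite yk andbT; apply/existsP; exists i; rewrite qi eqxx.
Qed.

Lemma S_out (qf : nat -> 'I_d -> bool) j f : f \in Sg qf j ->
  exists i b, [/\ qf j i, b \in kp (Lj j + d) & f = [set uu i; b]].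
Proof.
move/gr_out => [a [b [_ /andP[/existsP[i /andP[qi /eqP ->]] bk] ->]]].
by exists i, b.
Qed.

Lemma Q_vnb (qf : nat -> 'I_d -> bool) (x : {ffun 'I_d -> bool}) j y : [set vv; y] \in QG qf x j ->
  y \in kp (Lj j) \/ exists i, y = uu i /\ x i.
Proof.
case/setUP; first exact: H_vnb.
move/S_out => [i [b [_ bk e]]].
case: (pair_eq e) => [[E _]|[E _]].
  by move: (vv_uu i); rewrite E eqxx.
by move: bk; rewrite -E vv_kp.
Qed.

Lemma Q_unb (qf : nat -> 'I_d -> bool) (x : {ffun 'I_d -> bool}) j i y : ~~ qf j i -> [set uu i; y] \in QG qf x j ->
  y = vv \/ y \in kp (Lj j).-1.
Proof.
move=> nq; case/setUP; first exact: H_unb.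
move/S_out => [i' [b [qi' bk e]]].
case: (pair_eq e) => [[E _]|[E _]].
  by move: qi'; rewrite -(uu_inj E) (negbTE nq).
by move: bk; rewrite -E uu_kp.
Qed.

Lemma core_H (qf : nat -> 'I_d -> bool) (x : {ffun 'I_d -> bool}) j : Lj j + d < M ->
  core_number (HG qf x j) vv = Lj j.
Proof.
move=> hM.
have := @core_eq (HG qf x j) (Lj j) pred0 [pred i | x i] (Lj_pos j) hM.
rewrite card0 addn0; apply.
- by move=> a b ha hb ab; apply: H_cl.
- by move=> y yk; apply: H_vk.
- by [].
- by [].
- by move=> y /H_vnb [->|[i [-> xi]]]; [left|right; exists i; rewrite /= xi].
- by move=> i _ y /H_unb.
Qed.

Lemma core_Q (qf : nat -> 'I_d -> bool) (x : {ffun 'I_d -> bool}) j : Lj j + d < M ->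
  core_number (QG qf x j) vv = Lj j + #|[pred i | x i && qf j i]|.
Proof.
move=> hM.
apply: (@core_eq (QG qf x j) (Lj j) [pred i | x i && qf j i] [pred i | x i && ~~ qf j i] (Lj_pos j) hM).
- by move=> a b ha hb ab; apply/Q_H/H_cl.
- by move=> y yk; apply/Q_H/H_vk.
- by move=> i /andP[_ qi] y yk; apply: Q_u.
- by move=> i /andP[xi _]; apply/Q_H/H_x.
- move=> y /Q_vnb [->|[i [-> xi]]]; [by left|right; exists i; split=> //].
  by rewrite /= xi; case: (qf j i).
- by move=> i /andP[_ nq] y /(Q_unb nq).
Qed.


Lemma card_gr (r : rel 'I_n) (A B : {set 'I_n}) :
  (forall a b, r a b -> (a \in A) && (b \in B)) -> #|gr r| <= #|A| * #|B|.
Proof.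
move=> hr.
apply: (@leq_trans #|[set [set p.1; p.2] | p in setX A B]|); last first.
  by rewrite -cardsX; apply: leq_imset_card.
apply: subset_leq_card; apply/subsetP => f /gr_out [a [b [_ rab ->]]].
by apply/imsetP; exists (a, b); rewrite // inE /= hr.
Qed.

Lemma card_E0 : #|E0g| <= n * n.
Proof.
apply: leq_trans (card_gr (A := setT) (B := setT) _) _; first by move=> *; rewrite !inE.
by rewrite cardsT card_ord.
Qed.

Lemma card_S (qf : nat -> 'I_d -> bool) j : #|Sg qf j| <= d * n.
Proof.
apply: leq_trans (card_gr (A := uu @: setT) (B := setT) _) _.
  by move=> a b /andP[/existsP[i /andP[_ /eqP ->]] _]; rewrite inE andbT; apply/imsetP; exists i.
rewrite cardsT card_ord leq_mul2r; apply/orP; right.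
by apply: leq_trans (leq_imset_card _ _) _; rewrite cardsT card_ord.
Qed.

Lemma card_T j : #|Tg j| <= n.
Proof.
apply: leq_trans (card_gr (A := [set vv]) (B := setT) _) _.
  by move=> a b /andP[/eqP -> _]; rewrite !inE eqxx.
by rewrite cards1 cardsT card_ord mul1n.
Qed.

Lemma card_eg i : #|eg i| = 2.
Proof. by rewrite cards2 vv_uu. Qed.

End Gadget.

Lemma inner_card d (x q : {ffun 'I_d -> bool}) : inner x q = #|[pred i | x i && q i]|.
Proof.
rewrite /inner -sum1_card [RHS]big_mkcond /=; apply: eq_bigr => i _.
by rewrite inE; case: (x i && q i).
Qed.


Definition Mf (zeta d : nat) := d.+1 * (zeta * d).+1 + d.+1.
Definition vfun (zeta d : nat) := (d + Mf zeta d).+1.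
Definition tfun (zeta d : nat) := vfun zeta d * vfun zeta d + d + zeta * d * (d * vfun zeta d + vfun zeta d).

Lemma Mf_mono zeta d1 d2 : d1 < d2 -> Mf zeta d1 < Mf zeta d2.
Proof.
move=> h; rewrite /Mf.
have : d1.+1 * (zeta * d1).+1 <= d2.+1 * (zeta * d2).+1.
  by apply: leq_mul; [lia| rewrite ltnS leq_mul2l ltnW ?orbT].
lia.
Qed.

Lemma vfun_mono zeta d1 d2 : d1 < d2 -> vfun zeta d1 < vfun zeta d2.
Proof. move=> h; have := Mf_mono zeta h; rewrite /vfun; lia. Qed.

Lemma tfun_mono zeta d1 d2 : d1 < d2 -> tfun zeta d1 < tfun zeta d2.
Proof.
move=> h; have h1 := vfun_mono zeta h; rewrite /tfun.
have a : vfun zeta d1 * vfun zeta d1 <= vfun zeta d2 * vfun zeta d2 by apply: leq_mul; lia.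
have b : zeta * d1 <= zeta * d2 by rewrite leq_mul2l ltnW ?orbT.
have c : d1 * vfun zeta d1 <= d2 * vfun zeta d2 by apply: leq_mul; lia.
have e : zeta * d1 * (d1 * vfun zeta d1 + vfun zeta d1) <= zeta * d2 * (d2 * vfun zeta d2 + vfun zeta d2).
  by apply: leq_mul => //; lia.
lia.
Qed.

Lemma vfun_bound zeta d : 0 < d -> vfun zeta d <= (2 * zeta + 6) * d ^ 2.
Proof.
move=> d0; rewrite /vfun /Mf.
have h1 : d.+1 * (zeta * d).+1 <= (2 * d) * ((zeta + 1) * d) by apply: leq_mul; nia.
have h2 : (2 * d) * ((zeta + 1) * d) = (2 * zeta + 2) * d ^ 2 by rewrite expnS expn1; nia.
have h3 : d <= d ^ 2 by rewrite expnS expn1 leq_pmulr.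
rewrite mulnDl; lia.
Qed.

Lemma tfun_bound zeta d : 0 < d ->
  tfun zeta d <= ((2 * zeta + 6) ^ 2 + 2 * zeta * (2 * zeta + 6) + 1) * d ^ 4.
Proof.
move=> d0; have hv := vfun_bound zeta d0; rewrite /tfun.
set v := vfun zeta d in hv *; set V := 2 * zeta + 6 in hv *.
have e4 : d ^ 4 = d ^ 2 * d ^ 2 by rewrite -expnD.
have h1 : v * v <= (V * d ^ 2) * (V * d ^ 2) by apply: leq_mul.
have h1' : (V * d ^ 2) * (V * d ^ 2) = V ^ 2 * d ^ 4 by rewrite e4 expnS expn1; nia.
have h2 : d <= d ^ 4 by rewrite -{1}(expn1 d) leq_pexp2l.
have h3 : d * v + v <= (2 * d) * (V * d ^ 2) by rewrite addnC -mulSn; apply: leq_mul; lia.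
have h4 : zeta * d * (d * v + v) <= zeta * d * ((2 * d) * (V * d ^ 2)) by rewrite leq_mul2l h3 orbT.
have h4' : zeta * d * ((2 * d) * (V * d ^ 2)) = 2 * zeta * V * d ^ 4 by rewrite e4 !expnS expn0; nia.
rewrite !mulnDl mul1n; lia.
Qed.

Theorem mainTheorem4 :
  forall zeta : nat,
  exists vf tf : nat -> nat,
    core_AND_gadget zeta vf tf /\
    bigO vf (fun d => d ^ 2) /\ bigO tf (fun d => d ^ 4).
Proof.
move=> zeta; exists (vfun zeta), (tfun zeta); split; last split.
3: by exists ((2 * zeta + 6) ^ 2 + 2 * zeta * (2 * zeta + 6) + 1), 1 => d; apply: tfun_bound.
2: by exists (2 * zeta + 6), 1 => d; apply: vfun_bound.
split; first by split=> // d1 d2; apply: vfun_mono.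
split.
  split=> [d|d1 d2]; last by apply: tfun_mono.
  have hp : 0 < vfun zeta d * vfun zeta d by rewrite muln_gt0 /vfun.
  rewrite /tfun; lia.
move=> d.
pose M := Mf zeta d.
exists (@E0g d M), (@vv d M), (@eg d M); split; first exact: gr_edge.
split; first by move=> i; apply: card_eg.
move=> q.
pose qf (j : nat) (i : 'I_d) : bool := if insub j is Some jj then q jj i else false.
exists (@Sg d M qf), (@Tg d M), (fun _ a => INR a).
have hM j : j < zeta * d -> Lj d j + d < M.
  move=> hj; rewrite /M /Mf /Lj.
  have : d.+1 * j.+1 <= d.+1 * (zeta * d) by rewrite leq_mul2l hj orbT.
  lia.
split; first by move=> j _; split; apply: gr_edge.
split; first by move=> j _ a b; apply: Rle_refl.
split.
  move=> x j.
  rewrite (core_Q qf x (hM _ (ltn_ord j))) (core_H qf x (hM _ (ltn_ord j))).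
  rewrite plus_INR inner_card.
  have -> : qf j = q j by rewrite /qf valK.
  rewrite /Rminus Rplus_comm -Rplus_assoc Rplus_opp_l Rplus_0_l //.
rewrite /tfun.
have hs : \sum_(j < zeta * d) (#|@Sg d M qf j| + #|@Tg d M j|) <= zeta * d * (d * vfun zeta d + vfun zeta d).
  apply: leq_trans (_ : \sum_(j < zeta * d) (d * vfun zeta d + vfun zeta d) <= _).
    by apply: leq_sum => j _; apply: leq_add; [apply: card_S|apply: card_T].
  by rewrite sum_nat_const card_ord.
have h0 := @card_E0 d M.
rewrite /vfun -/M in hs *; lia.
Qed.
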